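(* Assume that for each $k$ and each $x\in\mathrm{supp}(\hat{\mathsf p}_k)$ we have $\hat\pi_j(x)=0$ for all $j\neq k$ (in particular the $\hat{\mathsf p}_k$ have mutually disjoint supports), and let $\epsilon_k=D_{KL}(\hat{\mathsf p}_k\,\|\,\hat\pi_k)<\infty$. Consider any static gate in $\mathcal G_1$, i.e. $g(x,k)=w_k$ independent of $x$ (equivalently $w\in\Delta$), with model $\pi_w=\sum_kw_k\hat\pi_k$. Then $$\max_{k\in[1,p]}D_{KL}(\hat{\mathsf p}_k\,\|\,\pi_w)\ \ge\ \log\Big(\sum_{j=1}^pe^{\epsilon_j}\Big).$$
   Context: Fix an integer $p\ge 1$, $[1,p]=\{1,\dots,p\}$, $\Delta=\{\lambda\in\mathbb R^p:\lambda_k\ge 0,\ \sum_k\lambda_k=1\}$. Let $\hat{\mathsf p}_1,\dots,\hat{\mathsf p}_p$ be probability distributions with finite supports, $\mathcal X_0=\bigcup_k\mathrm{supp}(\hat{\mathsf p}_k)$, and $\hat\pi_1,\dots,\hat\pi_p$ probability distributions on $\mathcal X_0$. A gate is $g:\mathcal X_0\times[1,p]\to[0,1]$ with $\sum_kg(x,k)=1$ for each $x$; $\pi_g(x)=\sum_kg(x,k)\hat\pi_k(x)$, $Z_g=\sum_{x\in\mathcal X_0}\pi_g(x)$, $\mathcal G_1=\{g:Z_g=1\}$. $D_{KL}(P\|Q)=\sum_xP(x)\log\frac{P(x)}{Q(x)}\in[0,\infty]$ with conventions $0\log\frac0q=0$, $a\log\frac a0=+\infty$ for $a>0$. *)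

(* Defs.v *)
From HB Require Import structures.
From mathcomp Require Import all_boot all_order all_algebra.
From mathcomp Require Import all_classical all_reals all_analysis.
Set Implicit Arguments. Unset Strict Implicit. Unset Printing Implicit Defensive.
Import Order.TTheory GRing.Theory Num.Theory.
Local Open Scope ring_scope.

Definition is_dist (R : realType) (T : finType) (f : T -> R) : Prop :=
  (forall x, 0 <= f x) /\ \sum_(x : T) f x = 1.

Definition KL_term (R : realType) (a q : R) : \bar R :=
  if a == 0 then 0%E
  else if q == 0 then +oo%E
  else (a * ln (a / q))%:E.

Definition KL (R : realType) (T : finType) (P Q : T -> R) : \bar R :=
  (\sum_(x : T) KL_term (P x) (Q x))%E.

Definition mix (R : realType) (T : finType) (p : nat) (w : 'I_p -> R)
  (Pi : 'I_p -> T -> R) : T -> R := fun x => \sum_(k < p) w k * Pi k x.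

(* Main.v *)
Require Import Defs.
From HB Require Import structures.
From mathcomp Require Import all_boot all_order all_algebra.
From mathcomp Require Import all_classical all_reals all_analysis.
Import Order.TTheory GRing.Theory Num.Theory.
Set Implicit Arguments. Unset Strict Implicit.
Local Open Scope ring_scope.

Section S.
Variable R : realType.
Variable T : finType.

Definition rKL (P Q : T -> R) : R :=
  \sum_x (if P x == 0 then 0 else P x * ln (P x / Q x)).

Lemma KL_term_ninf (a q : R) : KL_term a q != -oo%E.
Proof. by rewrite /KL_term; case: ifP => //; case: ifP. Qed.

Lemma KL_pinf (P Q : T -> R) x : P x != 0 -> Q x = 0 -> KL P Q = +oo%E.
Proof.
move=> hP hQ; rewrite /KL (bigD1 x) //= {1}/KL_term (negbTE hP) hQ eqxx.
apply: addye.
apply: (big_ind (fun y : \bar R => y != -oo%E)) => //.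
- by move=> [a| |] [b| |].
- by move=> i _; apply: KL_term_ninf.
Qed.

Lemma KL_fin (P Q : T -> R) : (KL P Q < +oo)%E ->
  forall x, P x != 0 -> Q x != 0.
Proof.
move=> h x hP; apply/negP => /eqP hQ.
by move: h; rewrite (KL_pinf hP hQ) ltxx.
Qed.

Lemma KL_rKL (P Q : T -> R) : (forall x, P x != 0 -> Q x != 0) ->
  KL P Q = (rKL P Q)%:E.
Proof.
move=> h; rewrite /KL /rKL -sumEFin; apply: eq_bigr => x _.
rewrite /KL_term; case: ifP => // hP.
by rewrite (negbTE (h x (negbT hP))).
Qed.
End S.
Unset Implicit Arguments. Set Strict Implicit.

Theorem mainTheorem4 (R : realType) (T : finType) (p : nat) (hp : (0 < p)%N)
  (P Pi : 'I_p -> T -> R)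
  (hP : forall k, is_dist (P k))
  (hPi : forall k, is_dist (Pi k))
  (hX0 : forall x : T, exists k, P k x != 0)
  (hdisj : forall (k j : 'I_p) (x : T), P k x != 0 -> j != k -> Pi j x = 0)
  (heps : forall k, (KL (P k) (Pi k) < +oo)%E)
  (w : 'I_p -> R) (hw0 : forall k, 0 <= w k) (hw1 : \sum_(k < p) w k = 1) :
  ((ln (\sum_(j < p) expR (fine (KL (P j) (Pi j)))))%:E
     <= \big[Order.max/-oo]_(k < p) KL (P k) (mix w Pi))%E.
Proof.
have hfin k := KL_fin (heps k).
have eE k : fine (KL (P k) (Pi k)) = rKL (P k) (Pi k) by rewrite KL_rKL //; exact: hfin.
under eq_bigr => j _ do rewrite eE.
set S := \sum_(j < p) _.
have S0 : 0 < S.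
  rewrite /S (bigD1 (Ordinal hp)) //= ltr_pwDl ?expR_gt0 //.
  by apply: sumr_ge0 => i _; apply/ltW/expR_gt0.
have SE : S = \sum_(j < p) expR (rKL (P j) (Pi j)) by [].
clearbody S.
have [k hk] : exists k, w k * S <= expR (rKL (P k) (Pi k)).
  apply/not_existsP => hn.
  have : S < S.
    rewrite -[X in _ < X]mul1r -hw1 mulr_suml [X in X < _]SE.
    rewrite [X in _ < X](bigD1 (Ordinal hp)) // [X in X < _](bigD1 (Ordinal hp)) //=.
    apply: ltr_leD.
    rewrite ltNge; apply/negP. apply: hn.
    apply: ler_sum => i _; apply/ltW; rewrite ltNge; apply/negP; apply: hn.
  by rewrite ltxx.
apply: (le_trans _ (le_bigmax _ _ k)).
have hmix x : P k x != 0 -> mix w Pi x = w k * Pi k x.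
  move=> hx; rewrite /mix (bigD1 k) //= big1 ?addr0 // => j hj.
  by rewrite (hdisj k j x hx hj) mulr0.
have [x hx] : exists x, P k x != 0.
  apply/not_existsP => hn; have := (hP k).2.
  rewrite big1 => [/eqP|y _]; first by rewrite eq_sym oner_eq0.
  by apply/eqP/negPn/negP; apply: hn.
have [wz|wpos] := eqVneq (w k) 0.
  rewrite (KL_pinf hx) ?leey //.
  by rewrite hmix // wz mul0r.
have wk : 0 < w k by rewrite lt0r wpos hw0.
rewrite KL_rKL; last first.
  move=> y hy; rewrite hmix // mulf_neq0 //; exact: hfin.
rewrite lee_fin.
have -> : rKL (P k) (mix w Pi) = rKL (P k) (Pi k) - ln (w k).
  rewrite /rKL.
  have -> : ln (w k) = \sum_x P k x * ln (w k).
    by rewrite -mulr_suml (hP k).2 mul1r.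
  rewrite -sumrB; apply: eq_bigr => y _.
  case: ifP => [/eqP -> | hy]; first by rewrite mul0r subr0.
  have hy' := negbT hy.
  have Py : 0 < P k y by rewrite lt0r hy' (hP k).1.
  have Piy : 0 < Pi k y by rewrite lt0r hfin // (hPi k).1.
  rewrite hmix // invfM mulrCA.
  rewrite [ln (_ * (_ / _))]lnM ?posrE ?invr_gt0 ?divr_gt0 //.
  by rewrite lnV ?posrE // mulrDr mulrN addrC.
rewrite lerBrDr addrC -lnM ?posrE //.
by rewrite -ler_expR lnK ?posrE ?mulr_gt0 // mulrC.
Qed.
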